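(* Let $\phi:Z\to[-\infty,+\infty]$ be proper and closed and suppose Assumptions (A1) and (A2) hold for some $\lambda\in\mathbb R$. Then for every $z\in\overline{D\phi}$, $\lim_{\tau\downarrow0}J_\tau z=z$. In particular $\overline{D\phi}=\overline{D(|\partial\phi|)}$.
   Context: $(X,\mathsf d_X)$, $(Y,\mathsf d_Y)$ complete metric spaces; $Z=X\times Y$ with $\mathsf d_Z=(\mathsf d_X^2+\mathsf d_Y^2)^{1/2}$. $D_X\phi=\{x:\phi(x,y)<+\infty\ \forall y\}$, $D_Y\phi=\{y:\phi(x,y)>-\infty\ \forall x\}$, $D\phi=D_X\phi\times D_Y\phi$; proper: $D\phi\ne\emptyset$; closed: for $x\in D_X\phi$, $y\mapsto\phi(x,y)$ upper semicontinuous, for $y\in D_Y\phi$, $x\mapsto\phi(x,y)$ lower semicontinuous. (A1): $\phi=+\infty$ on $(X\setminus D_X\phi)\times D_Y\phi$, $\phi=-\infty$ on $D_X\phi\times(Y\setminus D_Y\phi)$. $\lambda^-=\max\{-\lambda,0\}$, $1/\lambda^-:=+\infty$ if $\lambda^-=0$. $\Phi_\tau(x,y;x',y')=\phi(x',y')+\frac1{2\tau}(\mathsf d_X^2(x',x)-\mathsf d_Y^2(y',y))$. $f$ on $Z$ is $\mu$-convex-concave along curves $\gamma,\sigma$ if for all $t\in[0,1]$: $f(\gamma_t,y)\le(1-t)f(\gamma_0,y)+tf(\gamma_1,y)-\frac\mu2t(1-t)\mathsf d_X^2(\gamma_0,\gamma_1)$ for all $y$ and $f(x,\sigma_t)\ge(1-t)f(x,\sigma_0)+tf(x,\sigma_1)+\frac\mu2t(1-t)\mathsf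 d_Y^2(\sigma_0,\sigma_1)$ for all $x$. (A2) for $\lambda$: for every $(x,y)\in Z$, $(x_0,y_0),(x_1,y_1)\in D\phi$ there are continuous curves $\gamma$ from $x_0$ to $x_1$, $\sigma$ from $y_0$ to $y_1$ such that for all $\tau\in(0,1/\lambda^-)$, $(x',y')\mapsto\Phi_\tau(x,y;x',y')$ is $(\tau^{-1}+\lambda)$-convex-concave along them. For $\tau\in(0,1/\lambda^-)$, $J_\tau z$ is the (unique, existing) saddle point of $z'\mapsto\Phi_\tau(z;z')$. Slope: for $z=(x,y)\in D\phi$ not isolated, $|\partial\phi|(z)=\limsup_{D\phi\ni z'=(x',y')\to z}\frac{\max\{\phi(x,y')-\phi(x',y),0\}}{\mathsf d_Z(z',z)}$; $0$ at isolated points of $D\phi$; $+\infty$ off $D\phi$. $D(|\partial\phi|)=\{z\in D\phi:|\partial\phi|(z)<+\infty\}$. *)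

(* Defs.v *)
From Stdlib Require Import Reals Classical ClassicalEpsilon.
From Coquelicot Require Import Coquelicot.
Open Scope R_scope.

Definition is_metric {X : Type} (d : X -> X -> R) : Prop :=
  (forall x y, 0 <= d x y) /\
  (forall x y, d x y = 0 <-> x = y) /\
  (forall x y, d x y = d y x) /\
  (forall x y z, d x z <= d x y + d y z).

Definition is_complete {X : Type} (d : X -> X -> R) : Prop :=
  forall u : nat -> X,
    (forall eps, 0 < eps -> exists N, forall m n, (N <= m)%nat -> (N <= n)%nat ->
        d (u m) (u n) < eps) ->
    exists l, forall eps, 0 < eps -> exists N, forall n, (N <= n)%nat -> d (u n) l < eps.

Definition dZ {X Y : Type} (dX : X -> X -> R) (dY : Y -> Y -> R)
  (z z' : X * Y) : R :=
  sqrt (dX (fst z) (fst z') ^ 2 + dY (snd z) (snd z') ^ 2).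

Definition in_closure {T : Type} (d : T -> T -> R) (S : T -> Prop) (z : T) : Prop :=
  forall eps, 0 < eps -> exists z', S z' /\ d z z' < eps.

Definition DX {X Y : Type} (phi : X -> Y -> Rbar) (x : X) : Prop :=
  forall y, Rbar_lt (phi x y) p_infty.

Definition DY {X Y : Type} (phi : X -> Y -> Rbar) (y : Y) : Prop :=
  forall x, Rbar_lt m_infty (phi x y).

Definition Dphi {X Y : Type} (phi : X -> Y -> Rbar) (z : X * Y) : Prop :=
  DX phi (fst z) /\ DY phi (snd z).

Definition sp_proper {X Y : Type} (phi : X -> Y -> Rbar) : Prop :=
  exists z, Dphi phi z.

Definition usc_at {T : Type} (d : T -> T -> R) (f : T -> Rbar) (t0 : T) : Prop :=
  forall c : R, Rbar_lt (f t0) c ->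
    exists delta, 0 < delta /\ forall t, d t t0 < delta -> Rbar_lt (f t) c.

Definition lsc_at {T : Type} (d : T -> T -> R) (f : T -> Rbar) (t0 : T) : Prop :=
  forall c : R, Rbar_lt c (f t0) ->
    exists delta, 0 < delta /\ forall t, d t t0 < delta -> Rbar_lt c (f t).

Definition sp_closed {X Y : Type} (dX : X -> X -> R) (dY : Y -> Y -> R)
  (phi : X -> Y -> Rbar) : Prop :=
  (forall x, DX phi x -> forall y0, usc_at dY (fun y => phi x y) y0) /\
  (forall y, DY phi y -> forall x0, lsc_at dX (fun x => phi x y) x0).

Definition assumption_A1 {X Y : Type} (phi : X -> Y -> Rbar) : Prop :=
  (forall x y, ~ DX phi x -> DY phi y -> phi x y = p_infty) /\
  (forall x y, DX phi x -> ~ DY phi y -> phi x y = m_infty).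

(** lambda^- = max(-lambda, 0); tau in (0, 1/lambda^-) with 1/0 = +oo. *)
Definition lam_neg (lam : R) : R := Rmax (- lam) 0.

Definition tau_adm (lam tau : R) : Prop :=
  0 < tau /\ (lam_neg lam = 0 \/ tau * lam_neg lam < 1).

Definition Phi_tau {X Y : Type} (dX : X -> X -> R) (dY : Y -> Y -> R)
  (phi : X -> Y -> Rbar) (tau : R) (z : X * Y) (x' : X) (y' : Y) : Rbar :=
  Rbar_plus (phi x' y')
    (Finite ((dX x' (fst z) ^ 2 - dY y' (snd z) ^ 2) / (2 * tau))).

Definition curve_from_to {T : Type} (d : T -> T -> R) (g : R -> T) (a b : T) : Prop :=
  g 0 = a /\ g 1 = b /\
  forall t, 0 <= t <= 1 -> forall eps, 0 < eps -> exists delta, 0 < delta /\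
    forall s, 0 <= s <= 1 -> Rabs (s - t) < delta -> d (g s) (g t) < eps.

Definition convex_concave_along {X Y : Type} (dX : X -> X -> R) (dY : Y -> Y -> R)
  (f : X -> Y -> Rbar) (mu : R) (gamma : R -> X) (sigma : R -> Y) : Prop :=
  forall t, 0 <= t <= 1 ->
    (forall y, Rbar_le (f (gamma t) y)
       (Rbar_plus
          (Rbar_plus (Rbar_mult (1 - t) (f (gamma 0) y)) (Rbar_mult t (f (gamma 1) y)))
          (Finite (- (mu / 2) * t * (1 - t) * dX (gamma 0) (gamma 1) ^ 2)))) /\
    (forall x, Rbar_le
       (Rbar_plus
          (Rbar_plus (Rbar_mult (1 - t) (f x (sigma 0))) (Rbar_mult t (f x (sigma 1))))
          (Finite ((mu / 2) * t * (1 - t) * dY (sigma 0) (sigma 1) ^ 2)))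
       (f x (sigma t))).

Definition assumption_A2 {X Y : Type} (dX : X -> X -> R) (dY : Y -> Y -> R)
  (phi : X -> Y -> Rbar) (lam : R) : Prop :=
  forall (z : X * Y) (x0 : X) (y0 : Y) (x1 : X) (y1 : Y),
    Dphi phi (x0, y0) -> Dphi phi (x1, y1) ->
    exists (gamma : R -> X) (sigma : R -> Y),
      curve_from_to dX gamma x0 x1 /\ curve_from_to dY sigma y0 y1 /\
      forall tau, tau_adm lam tau ->
        convex_concave_along dX dY (Phi_tau dX dY phi tau z) (/ tau + lam) gamma sigma.

Definition is_saddle {X Y : Type} (f : X -> Y -> Rbar) (w : X * Y) : Prop :=
  forall x' y', Rbar_le (f (fst w) y') (f (fst w) (snd w)) /\
                Rbar_le (f (fst w) (snd w)) (f x' (snd w)).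

(** max{phi(x,y') - phi(x',y), 0} / d_Z(z',z); for z, z' in D(phi) both
    values phi(x,y'), phi(x',y) are finite, so real parts are exact. *)
Definition slope_quot {X Y : Type} (dX : X -> X -> R) (dY : Y -> Y -> R)
  (phi : X -> Y -> Rbar) (z z' : X * Y) : R :=
  Rmax (real (phi (fst z) (snd z')) - real (phi (fst z') (snd z))) 0
  / dZ dX dY z' z.

Definition isolated_in {T : Type} (d : T -> T -> R) (S : T -> Prop) (z : T) : Prop :=
  exists r, 0 < r /\ forall z', S z' -> d z' z < r -> z' = z.

Definition slope_sup {X Y : Type} (dX : X -> X -> R) (dY : Y -> Y -> R)
  (phi : X -> Y -> Rbar) (z : X * Y) (r : R) : Rbar :=
  Lub_Rbar (fun q => exists z', Dphi phi z' /\ 0 < dZ dX dY z' z < r /\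
                                q = slope_quot dX dY phi z z').

Definition slope_limsup {X Y : Type} (dX : X -> X -> R) (dY : Y -> Y -> R)
  (phi : X -> Y -> Rbar) (z : X * Y) : Rbar :=
  Glb_Rbar (fun q => exists r, 0 < r /\ slope_sup dX dY phi z r = Finite q).

Definition slope {X Y : Type} (dX : X -> X -> R) (dY : Y -> Y -> R)
  (phi : X -> Y -> Rbar) (z : X * Y) : Rbar :=
  if excluded_middle_informative (Dphi phi z) then
    (if excluded_middle_informative (isolated_in (dZ dX dY) (Dphi phi) z)
     then Finite 0 else slope_limsup dX dY phi z)
  else p_infty.

Definition Dslope {X Y : Type} (dX : X -> X -> R) (dY : Y -> Y -> R)
  (phi : X -> Y -> Rbar) (z : X * Y) : Prop :=
  Dphi phi z /\ Rbar_lt (slope dX dY phi z) p_infty.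

(* Main.v *)
Require Import Defs.
From Stdlib Require Import Classical ClassicalEpsilon.
From Stdlib Require Import Reals Lra Psatz.
From Coquelicot Require Import Coquelicot.
Open Scope R_scope.

Definition clamp (t : R) := Rmax 0 (Rmin t 1).

Lemma clamp_in t : 0 <= clamp t <= 1.
Proof. unfold clamp, Rmax, Rmin; repeat destruct Rle_dec; lra. Qed.

Lemma clamp_id t : 0 <= t <= 1 -> clamp t = t.
Proof. intros; unfold clamp, Rmax, Rmin; repeat destruct Rle_dec; lra. Qed.

Lemma clamp_lip s t : Rabs (clamp s - clamp t) <= Rabs (s - t).
Proof. unfold clamp, Rmax, Rmin; repeat destruct Rle_dec; unfold Rabs; repeat destruct Rcase_abs; lra. Qed.

Lemma ivt_F (F : R -> R) (t2 v : R) :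
  0 < t2 <= 1 ->
  (forall t, 0<=t<=1 -> forall e, 0<e -> exists d, 0<d /\ forall s, 0<=s<=1 -> Rabs(s-t)<d -> Rabs(F s - F t) < e) ->
  F 0 < v < F t2 -> exists c, 0 <= c <= t2 /\ F c = v.
Proof.
  intros Ht2 Hc Hv.
  set (G := fun t => F (clamp t) - v).
  assert (HG : forall a, 0 <= a <= t2 -> continuity_pt G a).
  { intros a Ha. unfold continuity_pt, continue_in, limit1_in, limit_in. intros e He.
    simpl. unfold R_dist.
    destruct (Hc a ltac:(lra) e He) as [d [Hd Hd']].
    exists d; split; [lra|]. intros x [_ Hx].
    unfold G. rewrite (clamp_id a) by lra.
    replace (F (clamp x) - v - (F a - v)) with (F (clamp x) - F a) by ring.
    apply Hd'. apply clamp_in.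
    replace a with (clamp a) at 1 by (apply clamp_id; lra). eapply Rle_lt_trans; [apply clamp_lip|exact Hx]. }
  destruct (Ranalysis5.IVT_interv G 0 t2 HG ltac:(lra)) as [c [Hc1 Hc2]].
  - unfold G; rewrite clamp_id by lra; lra.
  - unfold G; rewrite clamp_id by lra; lra.
  - exists c; split; [lra|]. unfold G in Hc2; rewrite clamp_id in Hc2 by lra; lra.
Qed.

Lemma core (a M rho tau lam : R) : 0 < rho -> 0 < tau -> 16*tau <= rho^2 -> 0 <= M ->
 exists C, forall b D (F : R -> R), 0 <= D <= M -> F 0 = 0 ->
 (forall t, 0<=t<=1 -> forall e, 0<e -> exists d, 0<d /\ forall s, 0<=s<=1 -> Rabs(s-t)<d -> Rabs(F s - F t) < e) ->
 (forall t, 0<=t<=1 -> exists p, (F t < rho -> a - 1 < p) /\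
     p + F t ^2 / (2*tau) <= (1-t)*a + t*(b + D^2/(2*tau)) - (/tau + lam)/2 * t*(1-t)*D^2) ->
 -C < b.
Proof.
  intros Hrho Htau Hrt HM.
  set (L := 2 + 8*M^2/tau + 4*Rabs lam * M^2).
  assert (HL1 : 2 <= L).
  { unfold L. assert (0 <= 8*M^2/tau) by (apply Rmult_le_pos; [nra| apply Rlt_le, Rinv_0_lt_compat; lra]).
    pose proof (Rabs_pos lam). nra. }
  assert (HL2 : 8*M^2 <= tau * L^2).
  { assert (8*M^2/tau <= L).
    { unfold L. pose proof (Rabs_pos lam). nra. }
    assert (8*M^2 <= tau * L) by (apply (Rmult_le_compat_l tau) in H; [|lra];
       replace (tau * (8*M^2/tau)) with (8*M^2) in H by (field; lra); lra).
    nra. }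
  assert (HL3 : 4 * Rabs lam * M^2 <= L).
  { unfold L. assert (0 <= 8*M^2/tau) by (apply Rmult_le_pos; [nra| apply Rlt_le, Rinv_0_lt_compat; lra]). lra. }
  exists (Rabs a + L). intros b D F HD HF0 Hcont Hineq.
  destruct (Rlt_or_le (-(Rabs a + L)) b) as [Hb|Hb]; [exact Hb|exfalso].
  set (t2 := 2 / L).
  assert (Ht2 : 0 < t2 <= 1) by (unfold t2; split; [apply Rdiv_lt_0_compat; lra|
     apply (Rmult_le_reg_r L); [lra|]; unfold Rdiv; rewrite Rmult_assoc, Rinv_l; lra]).
  assert (Ht2L : t2 * L = 2) by (unfold t2; field; lra).
  assert (Key : forall t, 0 <= t <= t2 -> F t < rho -> F t ^ 2 < 2*tau*(1 - t*L) + tau).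
  { intros t Ht Hrt'. destruct (Hineq t ltac:(lra)) as [p [Hp1 Hp2]].
    specialize (Hp1 Hrt').
    assert (E1 : F t ^2 < 2*tau*(1 + t*(b-a)) + t^2*D^2 - lam*tau*t*(1-t)*D^2).
    { assert (F t ^ 2 / (2*tau) < 1 + t*(b-a) + t^2*D^2/(2*tau) - lam/2*t*(1-t)*D^2).
      { assert (Heq: (1-t)*a + t*(b + D^2/(2*tau)) - (/tau + lam)/2 * t*(1-t)*D^2
          = a + t*(b-a) + t^2*D^2/(2*tau) - lam/2*t*(1-t)*D^2) by (field; lra). lra. }
      apply (Rmult_lt_compat_l (2*tau)) in H; [|lra].
      replace (2*tau*(F t ^2/(2*tau))) with (F t ^2) in H by (field; lra).
      replace (2*tau*(1 + t*(b-a) + t^2*D^2/(2*tau) - lam/2*t*(1-t)*D^2)) with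
        (2*tau*(1 + t*(b-a)) + t^2*D^2 - lam*tau*t*(1-t)*D^2) in H by (field; lra). exact H. }
    assert (E2 : t*(b-a) <= - t * L).
    { assert (b - a <= -L) by (pose proof (Rle_abs (-a)); rewrite Rabs_Ropp in H; lra). nra. }
    assert (E3 : t^2*D^2 <= tau/2).
    { assert (t^2 <= t2^2) by nra. assert (D^2 <= M^2) by nra.
      assert (t2^2 * M^2 <= tau/2).
      { assert (t2^2 * L^2 = 4) by (rewrite <- Rpow_mult_distr, Ht2L; ring).
        nra. }
      assert (0 <= t^2) by nra. assert (0 <= D^2) by nra. nra. }
    assert (E4 : - lam*tau*t*(1-t)*D^2 <= tau/2).
    { assert (- lam * (t*(1-t)*D^2) <= Rabs lam * (t*(1-t)*D^2)).
      { assert (0 <= t*(1-t)*D^2) by (assert (0 <= t*(1-t)) by nra; nra).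
        pose proof (Rle_abs (-lam)). rewrite Rabs_Ropp in H0. nra. }
      assert (t*(1-t)*D^2 <= t2 * M^2) by (assert (t*(1-t) <= t2) by nra; assert (D^2 <= M^2) by nra;
         assert (0 <= t*(1-t)) by nra; nra).
      assert (Rabs lam * (t2*M^2) <= / 2).
      { assert (Rabs lam * (t2*M^2) * L = 2 * (Rabs lam * M^2)) by (rewrite <- Ht2L; ring).
        assert (Rabs lam * (t2*M^2) * L <= L / 2) by lra.
        apply (Rmult_le_reg_r L); lra. }
      pose proof (Rabs_pos lam).
      assert (Rabs lam * (t*(1-t)*D^2) <= Rabs lam * (t2*M^2)) by (apply Rmult_le_compat_l; lra).
      assert (- lam*tau*t*(1-t)*D^2 = tau * (- lam * (t*(1-t)*D^2))) by ring.
      nra. }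
    nra. }
  destruct (Rlt_or_le (F t2) rho) as [Hlt|Hge].
  - pose proof (Key t2 ltac:(lra) Hlt). nra.
  - destruct (ivt_F F t2 (3*rho/4) Ht2 Hcont ltac:(lra)) as [c [Hc1 Hc2]].
    pose proof (Key c Hc1 ltac:(lra)). rewrite Hc2 in H.
    assert (c * L >= 0) by nra. nra.
Qed.

Lemma mink a1 b1 a2 b2 a b : 0 <= a1 -> 0 <= b1 -> 0 <= a2 -> 0 <= b2 ->
  0 <= a <= a1 + a2 -> 0 <= b <= b1 + b2 ->
  sqrt (a^2 + b^2) <= sqrt (a1^2 + b1^2) + sqrt (a2^2 + b2^2).
Proof.
  intros.
  set (S1 := sqrt (a1^2+b1^2)). set (S2 := sqrt (a2^2+b2^2)).
  assert (E1 : S1^2 = a1^2+b1^2) by (apply pow2_sqrt; nra).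
  assert (E2 : S2^2 = a2^2+b2^2) by (apply pow2_sqrt; nra).
  assert (P1 : 0 <= S1) by apply sqrt_pos. assert (P2 : 0 <= S2) by apply sqrt_pos.
  assert (CS : a1*a2 + b1*b2 <= S1*S2).
  { assert ((a1*a2+b1*b2)^2 <= (S1*S2)^2).
    { replace ((S1*S2)^2) with (S1^2*S2^2) by ring. rewrite E1, E2. pose proof (pow2_ge_0 (a1*b2-a2*b1)). nra. }
    assert (0 <= S1*S2) by nra.
    destruct (Rle_or_lt (a1*a2+b1*b2) (S1*S2)); auto. nra. }
  rewrite <- (sqrt_pow2 (S1+S2)) by lra. apply sqrt_le_1_alt. nra.
Qed.

Lemma div_ineq p1 p2 a b tau : 0 < tau -> p1 + a/(2*tau) <= p2 + b/(2*tau) ->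
  2*tau*(p1-p2) <= b - a.
Proof.
  intros Ht H. apply (Rmult_le_compat_l (2*tau)) in H; [|lra].
  replace (2*tau*(p1 + a/(2*tau))) with (2*tau*p1 + a) in H by (field; lra).
  replace (2*tau*(p2 + b/(2*tau))) with (2*tau*p2 + b) in H by (field; lra). lra.
Qed.

Theorem mainTheorem13
  (X Y : Type) (dX : X -> X -> R) (dY : Y -> Y -> R)
  (HdX : is_metric dX) (HdY : is_metric dY)
  (HcX : is_complete dX) (HcY : is_complete dY)
  (phi : X -> Y -> Rbar) (lam : R)
  (Hproper : sp_proper phi) (Hclosed : sp_closed dX dY phi)
  (HA1 : assumption_A1 phi) (HA2 : assumption_A2 dX dY phi lam)
  (J : R -> X * Y -> X * Y)
  (HJ : forall tau z, tau_adm lam tau -> is_saddle (Phi_tau dX dY phi tau z) (J tau z)) :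
  (forall z, in_closure (dZ dX dY) (Dphi phi) z ->
     forall eps, 0 < eps -> exists delta, 0 < delta /\
       forall tau, 0 < tau < delta -> dZ dX dY (J tau z) z < eps) /\
  (forall z, in_closure (dZ dX dY) (Dphi phi) z <->
             in_closure (dZ dX dY) (Dslope dX dY phi) z).
Proof.
  destruct HdX as [dX0 [dXeq [dXsym dXtri]]].
  destruct HdY as [dY0 [dYeq [dYsym dYtri]]].
  assert (dXxx : forall x, dX x x = 0) by (intros; apply dXeq; reflexivity).
  assert (dYyy : forall y, dY y y = 0) by (intros; apply dYeq; reflexivity).
  set (d := dZ dX dY).
  assert (d_sq : forall z1 z2, d z1 z2 ^ 2 = dX (fst z1) (fst z2) ^ 2 + dY (snd z1) (snd z2) ^ 2).
  { intros; unfold d, dZ; apply pow2_sqrt. specialize (dX0 (fst z1) (fst z2)); specialize (dY0 (snd z1) (snd z2)); nra. }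
  assert (d0 : forall z1 z2, 0 <= d z1 z2) by (intros; apply sqrt_pos).
  assert (dsym : forall z1 z2, d z1 z2 = d z2 z1) by (intros; unfold d, dZ; rewrite dXsym, dYsym; reflexivity).
  assert (dzz : forall z, d z z = 0) by (intros; unfold d, dZ; rewrite dXxx, dYyy; replace (0^2+0^2) with 0 by ring; apply sqrt_0).
  assert (dtri : forall z1 z2 z3, d z1 z3 <= d z1 z2 + d z2 z3).
  { intros; unfold d, dZ; apply mink; auto. }
  assert (dXle : forall z1 z2, dX (fst z1) (fst z2) <= d z1 z2).
  { intros. pose proof (d_sq z1 z2). pose proof (d0 z1 z2). specialize (dX0 (fst z1) (fst z2)). specialize (dY0 (snd z1) (snd z2)). nra. }
  assert (dYle : forall z1 z2, dY (snd z1) (snd z2) <= d z1 z2).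
  { intros. pose proof (d_sq z1 z2). pose proof (d0 z1 z2). specialize (dX0 (fst z1) (fst z2)). specialize (dY0 (snd z1) (snd z2)). nra. }
  assert (deq : forall z1 z2, d z1 z2 = 0 -> z1 = z2).
  { intros z1 z2 H. pose proof (dXle z1 z2). pose proof (dYle z1 z2).
    specialize (dX0 (fst z1) (fst z2)). specialize (dY0 (snd z1) (snd z2)).
    assert (Hx : fst z1 = fst z2) by (apply dXeq; lra).
    assert (Hy : snd z1 = snd z2) by (apply dYeq; lra).
    destruct z1, z2; simpl in *; subst; reflexivity. }
  assert (fin : forall x y, DX phi x -> DY phi y -> phi x y = Finite (real (phi x y))).
  { intros x y Hx Hy. specialize (Hx y). specialize (Hy x). destruct (phi x y); simpl in *; easy. }
  set (t0 := / (lam_neg lam + 1)).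
  assert (ln0 : 0 <= lam_neg lam) by (unfold lam_neg; apply Rmax_r).
  assert (t0pos : 0 < t0) by (unfold t0; apply Rinv_0_lt_compat; lra).
  assert (adm : forall tau, 0 < tau <= t0 -> tau_adm lam tau).
  { intros tau Ht. split; [lra|]. right.
    assert (t0 * (lam_neg lam + 1) = 1) by (unfold t0; field; lra). nra. }
  assert (adm_down : forall tau s, tau_adm lam s -> 0 < tau <= s -> tau_adm lam tau).
  { intros tau s [Hs H] Ht. split; [lra|]. destruct H as [H|H]; [left; exact H| right; nra]. }
  assert (JD : forall tau z, tau_adm lam tau -> Dphi phi (J tau z)).
  { intros tau z Ht. destruct Hproper as [zp [Hzp1 Hzp2]].
    split.
    - intros y0. destruct (HJ tau z Ht (fst zp) y0) as [H1 H2]. unfold Phi_tau in H1, H2.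
      specialize (Hzp1 (snd (J tau z))).
      destruct (phi (fst (J tau z)) y0) eqn:E; simpl; auto.
      simpl in H1. destruct (phi (fst (J tau z)) (snd (J tau z))); simpl in H1, H2; try easy.
      destruct (phi (fst zp) (snd (J tau z))); simpl in *; easy.
    - intros x0. destruct (HJ tau z Ht x0 (snd zp)) as [H1 H2]. unfold Phi_tau in H1, H2.
      specialize (Hzp2 (fst (J tau z))).
      destruct (phi x0 (snd (J tau z))) eqn:E; simpl; auto.
      simpl in H2. destruct (phi (fst (J tau z)) (snd (J tau z))); simpl in H1, H2; try easy.
      destruct (phi (fst (J tau z)) (snd zp)); simpl in *; easy. }
  assert (F2 : forall tau z z', tau_adm lam tau -> Dphi phi z' ->
     2*tau*(real (phi (fst (J tau z)) (snd z')) - real (phi (fst z') (snd (J tau z))))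
       <= d z' z ^ 2 - d (J tau z) z ^ 2).
  { intros tau z z' Ht Hz'.
    destruct (JD tau z Ht) as [Hw1 Hw2]. destruct Hz' as [Hz1 Hz2].
    destruct (HJ tau z Ht (fst z') (snd z')) as [H1 H2].
    unfold Phi_tau in H1, H2.
    rewrite (fin _ _ Hw1 Hz2) in H1. rewrite (fin _ _ Hw1 Hw2) in H1, H2. rewrite (fin _ _ Hz1 Hw2) in H2.
    simpl in H1, H2. rewrite !d_sq.
    pose proof (div_ineq _ _ _ _ tau (proj1 Ht) (Rle_trans _ _ _ H1 H2)). lra. }
  assert (G : forall tau s z z', tau_adm lam tau -> tau_adm lam s ->
     s*(d (J tau z) z ^2 - d (J s z') z ^2) <= tau * (d (J tau z) z' ^2 - d (J s z') z' ^2)).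
  { intros tau s z z' Ht Hs.
    pose proof (F2 tau z (J s z') Ht (JD s z' Hs)) as H1.
    pose proof (F2 s z' (J tau z) Hs (JD tau z Ht)) as H2.
    destruct Ht as [Ht _]; destruct Hs as [Hs _].
    set (c := real (phi (fst (J tau z)) (snd (J s z'))) - real (phi (fst (J s z')) (snd (J tau z)))) in *.
    set (A := d (J s z') z ^ 2 - d (J tau z) z ^ 2) in *.
    set (B := d (J tau z) z' ^ 2 - d (J s z') z' ^ 2) in *.
    assert (H1' : 2*tau*c <= A) by (unfold c in *; nra).
    assert (H2' : -(2*s*c) <= B) by (unfold c in *; nra).
    assert (s*(2*tau*c) <= s*A) by (apply Rmult_le_compat_l; lra).
    assert (tau*(-(2*s*c)) <= tau*B) by (apply Rmult_le_compat_l; lra).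
    unfold A, B in *. nra. }
  assert (mono : forall z tau s, 0 < tau <= s -> tau_adm lam s -> d (J tau z) z <= d (J s z) z).
  { intros z tau s Hts Hs.
    pose proof (G tau s z z (adm_down tau s Hs Hts) Hs).
    pose proof (d0 (J tau z) z). pose proof (d0 (J s z) z).
    destruct (Req_dec tau s) as [->|Hne]; [lra|].
    assert (d (J tau z) z ^2 <= d (J s z) z ^2) by nra. nra. }
  destruct Hclosed as [Husc Hlsc].
  assert (LBX : forall x y, DX phi x -> DY phi y -> forall M, 0 <= M -> exists C,
     forall v, DX phi v -> dX x v <= M -> -C < real (phi v y)).
  { intros x y Hx Hy M HM.
    destruct (Hlsc y Hy x (real (phi x y) - 1)) as [rho [Hrho Hr]].
    { rewrite (fin x y Hx Hy); simpl; lra. }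
    set (tau := Rmin t0 (rho^2/16)).
    assert (Htau : 0 < tau <= t0).
    { unfold tau; split; [apply Rmin_glb_lt; [lra| nra]| apply Rmin_l]. }
    assert (Htau2 : 16*tau <= rho^2) by (pose proof (Rmin_r t0 (rho^2/16)); unfold tau; lra).
    destruct (core (real (phi x y)) M rho tau lam Hrho (proj1 Htau) Htau2 HM) as [C HC].
    exists C. intros v Hv HvM.
    destruct (HA2 (x,y) x y v y (conj Hx Hy) (conj Hv Hy)) as [g [sg [Hg [Hsg Hcv]]]].
    specialize (Hcv tau (adm tau Htau)).
    destruct Hg as [Hg0 [Hg1 Hgc]].
    apply (HC (real (phi v y)) (dX x v) (fun t => dX (g t) x)).
    - split; auto.
    - simpl. rewrite Hg0; apply dXxx.
    - intros t Ht e He. destruct (Hgc t Ht e He) as [dl [Hdl H]]. exists dl; split; auto.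
      intros s Hs Hst. specialize (H s Hs Hst).
      pose proof (dXtri (g s) (g t) x). pose proof (dXtri (g t) (g s) x). pose proof (dXsym (g s) (g t)).
      apply Rabs_def1; lra.
    - intros t Ht. destruct (Hcv t Ht) as [Hc1 _]. specialize (Hc1 y). unfold Phi_tau in Hc1. simpl fst in Hc1. simpl snd in Hc1.
      rewrite Hg0, Hg1 in Hc1. rewrite (fin x y Hx Hy), (fin v y Hv Hy) in Hc1.
      rewrite dXxx, dYyy, (dXsym v x) in Hc1.
      destruct (phi (g t) y) eqn:E.
      + exists r. split.
        * intro Hlt. specialize (Hr (g t) Hlt). rewrite E in Hr. simpl in Hr. exact Hr.
        * simpl in Hc1.
          replace ((dX (g t) x ^ 2 - 0 ^ 2) / (2 * tau)) with (dX (g t) x ^ 2 / (2 * tau)) in Hc1 by (field; lra).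
          replace ((0 ^ 2 - 0 ^ 2) / (2 * tau)) with 0 in Hc1 by (field; lra).
          replace ((dX x v ^ 2 - 0 ^ 2) / (2 * tau)) with (dX x v ^ 2 / (2 * tau)) in Hc1 by (field; lra).
          lra.
      + simpl in Hc1. easy.
      + specialize (Hy (g t)). rewrite E in Hy. easy. }
  assert (UBY : forall x y, DX phi x -> DY phi y -> forall M, 0 <= M -> exists C,
     forall v, DY phi v -> dY y v <= M -> real (phi x v) < C).
  { intros x y Hx Hy M HM.
    destruct (Husc x Hx y (real (phi x y) + 1)) as [rho [Hrho Hr]].
    { rewrite (fin x y Hx Hy); simpl; lra. }
    set (tau := Rmin t0 (rho^2/16)).
    assert (Htau : 0 < tau <= t0).
    { unfold tau; split; [apply Rmin_glb_lt; [lra| nra]| apply Rmin_l]. }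
    assert (Htau2 : 16*tau <= rho^2) by (pose proof (Rmin_r t0 (rho^2/16)); unfold tau; lra).
    destruct (core (- real (phi x y)) M rho tau lam Hrho (proj1 Htau) Htau2 HM) as [C HC].
    exists C. intros v Hv HvM.
    destruct (HA2 (x,y) x y x v (conj Hx Hy) (conj Hx Hv)) as [g [sg [Hg [Hsg Hcv]]]].
    specialize (Hcv tau (adm tau Htau)).
    destruct Hsg as [Hg0 [Hg1 Hgc]].
    enough (-C < - real (phi x v)) by lra.
    apply (HC (- real (phi x v)) (dY y v) (fun t => dY (sg t) y)).
    - split; auto.
    - simpl. rewrite Hg0; apply dYyy.
    - intros t Ht e He. destruct (Hgc t Ht e He) as [dl [Hdl H]]. exists dl; split; auto.
      intros s Hs Hst. specialize (H s Hs Hst).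
      pose proof (dYtri (sg s) (sg t) y). pose proof (dYtri (sg t) (sg s) y). pose proof (dYsym (sg s) (sg t)).
      apply Rabs_def1; lra.
    - intros t Ht. destruct (Hcv t Ht) as [_ Hc1]. specialize (Hc1 x). unfold Phi_tau in Hc1. simpl fst in Hc1. simpl snd in Hc1.
      rewrite Hg0, Hg1 in Hc1. rewrite (fin x y Hx Hy), (fin x v Hx Hv) in Hc1.
      rewrite dXxx, dYyy, (dYsym v y) in Hc1.
      destruct (phi x (sg t)) eqn:E.
      + exists (- r). split.
        * intro Hlt. specialize (Hr (sg t) Hlt). rewrite E in Hr. simpl in Hr. lra.
        * simpl in Hc1.
          replace ((0 ^ 2 - dY (sg t) y ^ 2) / (2 * tau)) with (- (dY (sg t) y ^ 2 / (2 * tau))) in Hc1 by (field; lra).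
          replace ((0 ^ 2 - 0 ^ 2) / (2 * tau)) with 0 in Hc1 by (field; lra).
          replace ((0 ^ 2 - dY y v ^ 2) / (2 * tau)) with (- (dY y v ^ 2 / (2 * tau))) in Hc1 by (field; lra).
          lra.
      + specialize (Hx (sg t)). rewrite E in Hx. easy.
      + simpl in Hc1. easy. }
  assert (DC : forall z, Dphi phi z -> forall eps, 0 < eps -> exists delta, 0 < delta /\
     forall tau, 0 < tau < delta -> d (J tau z) z < eps).
  { intros z [Hx Hy] eps He.
    set (M0 := d (J t0 z) z).
    destruct (LBX (fst z) (snd z) Hx Hy M0 (d0 _ _)) as [C1 HC1].
    destruct (UBY (fst z) (snd z) Hx Hy M0 (d0 _ _)) as [C2 HC2].
    set (K := Rabs (C1 + C2) + 1).
    assert (HK : 0 < K) by (unfold K; pose proof (Rabs_pos (C1+C2)); lra).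
    exists (Rmin t0 (eps^2/(2*K))). split.
    { apply Rmin_glb_lt; [lra|]. apply Rdiv_lt_0_compat; nra. }
    intros tau [Ht Htd].
    assert (Ht0 : tau < t0) by (pose proof (Rmin_l t0 (eps^2/(2*K))); lra).
    assert (Hte : tau < eps^2/(2*K)) by (pose proof (Rmin_r t0 (eps^2/(2*K))); lra).
    assert (Hadm : tau_adm lam tau) by (apply adm; lra).
    destruct (JD tau z Hadm) as [Hw1 Hw2].
    assert (Hm : d (J tau z) z <= M0) by (apply mono; [lra| apply adm; lra]).
    pose proof (F2 tau z z Hadm (conj Hx Hy)) as H. rewrite dzz in H.
    assert (A1 : -C1 < real (phi (fst (J tau z)) (snd z))).
    { apply HC1; auto. rewrite dXsym. pose proof (dXle (J tau z) z). lra. }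
    assert (A2 : real (phi (fst z) (snd (J tau z))) < C2).
    { apply HC2; auto. rewrite dYsym. pose proof (dYle (J tau z) z). lra. }
    assert (H3 : d (J tau z) z ^2 <= 2*tau*(C1+C2)) by nra.
    assert (H4 : C1 + C2 < K) by (unfold K; pose proof (Rle_abs (C1+C2)); lra).
    assert (H5 : tau * (2*K) < eps^2).
    { apply (Rmult_lt_compat_r (2*K)) in Hte; [|lra].
      replace (eps^2/(2*K)*(2*K)) with (eps^2) in Hte by (field; lra). exact Hte. }
    assert (H6 : d (J tau z) z ^2 < eps^2) by nra.
    pose proof (d0 (J tau z) z). nra. }
  assert (P1 : forall z, in_closure d (Dphi phi) z ->
     forall eps, 0 < eps -> exists delta, 0 < delta /\
       forall tau, 0 < tau < delta -> d (J tau z) z < eps).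
  { intros z Hz eps He.
    set (e1 := eps/8).
    destruct (Hz e1 ltac:(unfold e1; lra)) as [z' [Hz' Hzz']].
    destruct (DC z' Hz' e1 ltac:(unfold e1; lra)) as [dl [Hdl Hd]].
    set (s := Rmin t0 (dl/2)).
    assert (Hs : 0 < s <= t0) by (unfold s; split; [apply Rmin_glb_lt; lra| apply Rmin_l]).
    assert (Hsd : s < dl) by (pose proof (Rmin_r t0 (dl/2)); unfold s in *; lra).
    assert (Hsadm : tau_adm lam s) by (apply adm; lra).
    specialize (Hd s (conj (proj1 Hs) Hsd)).
    exists (s/4). split; [lra|]. intros tau [Ht Hts].
    assert (Htadm : tau_adm lam tau) by (apply (adm_down tau s Hsadm); lra).
    pose proof (G tau s z z' Htadm Hsadm) as HG.
    set (D := d (J tau z) z) in *. set (e := d (J s z') z) in *.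
    assert (He2 : e < 2*e1) by (pose proof (dtri (J s z') z' z); rewrite (dsym z' z) in *; unfold e; lra).
    assert (Hwz' : d (J tau z) z' <= D + e1) by (pose proof (dtri (J tau z) z z'); unfold D; lra).
    pose proof (d0 (J tau z) z'). pose proof (d0 (J s z') z'). pose proof (d0 (J s z') z).
    pose proof (d0 (J tau z) z).
    assert (Q1 : s*(D^2 - e^2) <= tau * (D + e1)^2).
    { assert (d (J tau z) z' ^2 <= (D+e1)^2) by nra. nra. }
    assert (Q2 : tau * (D+e1)^2 <= s/4 * (D+e1)^2) by (apply Rmult_le_compat_r; nra).
    assert (Q3 : D^2 - e^2 <= (D+e1)^2/4).
    { assert (s*(D^2 - e^2) <= s*((D+e1)^2/4)) by lra.
      apply (Rmult_le_reg_l s); lra. }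
    assert (Q4 : D^2 <= 9 * e1^2).
    { assert (e^2 <= 4*e1^2) by (unfold e in *; nra).
      assert ((D+e1)^2 <= 2*D^2 + 2*e1^2) by (pose proof (pow2_ge_0 (D-e1)); nra). nra. }
    unfold e1 in Q4. nra. }
  assert (SL : forall tau z, tau_adm lam tau -> Dslope dX dY phi (J tau z)).
  { intros tau z Ht. set (w := J tau z). split; [apply JD; exact Ht|].
    unfold slope. destruct (excluded_middle_informative (Dphi phi w)) as [_|Hn];
      [|exfalso; apply Hn, JD; exact Ht].
    destruct (excluded_middle_informative (isolated_in (dZ dX dY) (Dphi phi) w)) as [_|Hni]; [simpl; exact I|].
    assert (Hex : exists z', Dphi phi z' /\ d z' w < 1 /\ z' <> w).
    { apply NNPP; intro Hne; apply Hni; exists 1; split; [lra|]; intros z' Hz' Hdz.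
      apply NNPP; intro Hneq; apply Hne; exists z'; auto. }
    destruct Hex as [z1 [Hz1 [Hd1 Hne1]]].
    assert (Hd1p : 0 < d z1 w).
    { destruct (d0 z1 w) as [Hlt|Heq]; auto. exfalso; apply Hne1, deq; auto. }
    set (R0 := d w z).
    set (B := (1 + 2*R0)/(2*tau)).
    pose proof (proj1 Ht) as Htp.
    assert (UB : forall q, (fun q => exists z', Dphi phi z' /\ 0 < dZ dX dY z' w < 1 /\ q = slope_quot dX dY phi w z') q -> q <= B).
    { intros q [z' [Hz' [[Hp Hl] Hq]]]. subst q. unfold slope_quot.
      change (dZ dX dY) with d in Hp, Hl |- *.
      pose proof (F2 tau z z' Ht Hz') as H. fold w in H.
      set (c := real (phi (fst w) (snd z')) - real (phi (fst z') (snd w))) in *.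
      pose proof (dtri z' w z). fold R0 in H0. pose proof (d0 z' z). pose proof (d0 w z).
      assert (Hc : 2*tau*c <= d z' w * (1 + 2*R0)).
      { assert (d z' z ^2 <= (d z' w + R0)^2) by nra. unfold R0 in *. nra. }
      assert (HB : B * d z' w * (2*tau) = d z' w * (1 + 2*R0)) by (unfold B; field; lra).
      assert (Hc2 : c <= B * d z' w) by nra.
      assert (HB0 : 0 <= B) by (unfold B; apply Rmult_le_pos; [unfold R0 in *; lra| apply Rlt_le, Rinv_0_lt_compat; lra]).
      apply (Rmult_le_reg_r (d z' w)); [lra|].
      unfold Rdiv. rewrite Rmult_assoc, Rinv_l by lra. rewrite Rmult_1_r.
      apply Rmax_lub; nra. }
    destruct (Lub_Rbar_correct (fun q => exists z', Dphi phi z' /\ 0 < dZ dX dY z' w < 1 /\ q = slope_quot dX dY phi w z')) as [Hub Hleast].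
    assert (Hss : slope_sup dX dY phi w 1 = Lub_Rbar (fun q => exists z', Dphi phi z' /\ 0 < dZ dX dY z' w < 1 /\ q = slope_quot dX dY phi w z')) by reflexivity.
    pose proof (Hub (slope_quot dX dY phi w z1) (ex_intro _ z1 (conj Hz1 (conj (conj Hd1p Hd1) eq_refl)))) as Hlo.
    pose proof (Hleast (Finite B) UB) as Hhi.
    destruct (Lub_Rbar (fun q => exists z', Dphi phi z' /\ 0 < dZ dX dY z' w < 1 /\ q = slope_quot dX dY phi w z')) as [q| |] eqn:EL;
      [| simpl in Hhi; easy | simpl in Hlo; easy].
    unfold slope_limsup.
    destruct (Glb_Rbar_correct (fun q => exists r, 0 < r /\ slope_sup dX dY phi w r = Finite q)) as [Hlb _].
    pose proof (Hlb q (ex_intro _ 1 (conj Rlt_0_1 Hss))) as Hg.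
    destruct (Glb_Rbar (fun q => exists r, 0 < r /\ slope_sup dX dY phi w r = Finite q)); simpl in *; easy. }
  split; [exact P1|].
  intros z; split.
  - intros Hz eps He. destruct (P1 z Hz eps He) as [dl [Hdl H]].
    set (tau := Rmin t0 (dl/2)).
    assert (Htau : 0 < tau <= t0) by (unfold tau; split; [apply Rmin_glb_lt; lra| apply Rmin_l]).
    assert (Htd : tau < dl) by (pose proof (Rmin_r t0 (dl/2)); unfold tau in *; lra).
    exists (J tau z). split; [apply SL, adm; lra|].
    change (dZ dX dY) with d. rewrite dsym. apply H; lra.
  - intros Hz eps He. destruct (Hz eps He) as [z' [[Hz' _] Hd]]. exists z'; auto.
Qed.
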